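(* Let $G$ be a graph on vertex set $V=\{1,\ldots,N\}$ and $G_l$ a graph on $V$ with $E(G)\subseteq E(G_l)$. Suppose a path $P$ is an induced subgraph of $G$, with vertices $p_1,\ldots,p_n$ labelled in path order, such that $E(P^d)\subseteq E(G_l)$ for some positive integer $d$. If for each $i=1,\ldots,n-d-1$ the pair $\{p_i,p_{i+d}\}$ is focused on $V(P)$ with respect to $G$ and $G_l$, then the forces $\{p_i,p_{i+d}\}\rightarrow\{p_i,p_{i+d+1}\}$, $i=1,\ldots,n-d-1$, may be applied sequentially, and the resulting graph is \[G_{l_1}=G_l+\{\{p_i,p_{i+d+1}\}: 1\le i\le n-d-1\}.\] In particular, for every $A\in\mathcal{S}(G)$ and every $X\in\overline{\mathcal{S}_0}(G_l^c)$ with $AX-XA=0$, one has $X\in\overline{\mathcal{S}_0}(G_{l_1}^c)$.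
   Context: All graphs are finite, simple, undirected. For a graph $G$ on $\{1,\ldots,N\}$, $\mathcal{S}(G)$ is the set of real symmetric $N\times N$ matrices $A=(a_{ij})$ with $a_{ij}\neq0$ iff $\{i,j\}\in E(G)$ for $i\neq j$ (diagonal arbitrary). For a graph $H$ on $\{1,\ldots,N\}$, $\overline{\mathcal{S}_0}(H)$ is the set of real symmetric matrices whose $(i,j)$ entry is zero whenever $i=j$ or $\{i,j\}\notin E(H)$. $H^c$ is the complement of $H$. $P^d$ is the $d$-th power of $P$: the graph on $V(P)$ in which two vertices are adjacent iff their distance in $P$ is at most $d$. $N_G[v]$ is the closed neighbourhood of $v$, and $N_G[v]^c$ its complement in the vertex set. For nonempty $U\subseteq V$ and a graph $G'\supseteq G$ on $V$, a pair $\{i,j\}$ is focused on $U$ with respect to $G$ and $G'$ if $N_G[i]\cap N_{G'}[j]^c\subseteq U$ and $N_G[j]\cap N_{G'}[i]^c\subseteq U$. A force $\{i,j\}\rightarrow\{j,k\}$ with respect to $G$ and a current graph $G'\supseteq G$ on $V$ is valid when $i,j,k$ are pairwise distinct, $k\in N_G[i]$, and $\{i,j\}$ is focused on $\{k\}$ with respect to $G$ and $G'$; applying it replaces $G'$ by $G'+\{j,k\}$. (Known fact used to interpret forces: if $A\in\mathcal{S}(G)$, $X\in\overline{\mathcal{S}_0}(G'^c)$, $AX=XA$ and the force is valid, then $X\in\overline{\mathcal{S}_0}((G'+\{j,k\})^c)$.) *)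

(* Defs.v *)
(* Vertices {1..N} are represented by 'I_N (0-based). *)
From mathcomp Require Import all_boot all_order all_algebra.
Set Implicit Arguments. Unset Strict Implicit. Unset Printing Implicit Defensive.
Import Order.TTheory GRing.Theory Num.Theory.
Local Open Scope ring_scope.

Definition is_graph N (g : rel 'I_N) : Prop := symmetric g /\ irreflexive g.

Definition subgraph N (g g' : rel 'I_N) : Prop := forall x y, g x y -> g' x y.

Definition compl_graph N (g : rel 'I_N) : rel 'I_N :=
  fun x y => (x != y) && ~~ g x y.

Definition add_edge N (g : rel 'I_N) (a b : 'I_N) : rel 'I_N :=
  fun x y => [|| g x y, (x == a) && (y == b) | (x == b) && (y == a)].

Definition cnbhd N (g : rel 'I_N) (v : 'I_N) : {set 'I_N} :=
  [set u | (u == v) || g v u].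

Definition focused N (G G' : rel 'I_N) (i j : 'I_N) (U : {set 'I_N}) : bool :=
  ((cnbhd G i :&: ~: cnbhd G' j) \subset U) &&
  ((cnbhd G j :&: ~: cnbhd G' i) \subset U).

(* The force {i,j} -> {j,k} is valid w.r.t. G and current graph G' *)
Definition valid_force N (G G' : rel 'I_N) (i j k : 'I_N) : bool :=
  [&& i != j, j != k, i != k, k \in cnbhd G i & focused G G' i j [set k]].

Definition in_S (R : realFieldType) N (G : rel 'I_N) (A : 'M[R]_N) : Prop :=
  A^T = A /\ forall i j, i != j -> (A i j != 0) = G i j.

(* closure of S_0(H): symmetric, zero on the diagonal and on non-edges of H *)
Definition in_S0bar (R : realFieldType) N (H : rel 'I_N) (X : 'M[R]_N) : Prop :=
  X^T = X /\ forall i j, (i == j) || ~~ H i j -> X i j = 0.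

(* p : nat -> 'I_N, with p 0, ..., p (n-1) the vertices of an induced path of G
   listed in path order *)
Definition induced_path N (G : rel 'I_N) (n : nat) (p : nat -> 'I_N) : Prop :=
  (forall a b, a < n -> b < n -> p a = p b -> a = b)%N /\
  (forall a b, a < n -> b < n -> G (p a) (p b) = (a == b.+1) || (b == a.+1))%N.

Definition path_vertices N (n : nat) (p : nat -> 'I_N) : {set 'I_N} :=
  [set x | [exists a : 'I_n, x == p a]].

Definition pathpow_sub N (n d : nat) (p : nat -> 'I_N) (g : rel 'I_N) : Prop :=
  (forall a b, a < n -> b < n -> a != b -> `|a - b|%N <= d -> g (p a) (p b))%N.

(* Graph after applying the first m forces (0-based index i <-> paper i+1):
   G^(0) = Gl, G^(m+1) = G^(m) + {p m, p (m+d+1)} *)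
Fixpoint force_seq N (Gl : rel 'I_N) (p : nat -> 'I_N) (d m : nat) : rel 'I_N :=
  match m with
  | 0 => Gl
  | m'.+1 => add_edge (force_seq Gl p d m') (p m') (p (m' + d + 1)%N)
  end.

(* G_{l_1} = Gl + {{p_i, p_{i+d+1}} : 1 <= i <= n-d-1} (0-based here) *)
Definition Gl1 N (Gl : rel 'I_N) (n d : nat) (p : nat -> 'I_N) : rel 'I_N :=
  fun x y => Gl x y ||
    [exists i : 'I_n, ((i + d + 1 < n)%N) &&
       (((x == p i) && (y == p (i + d + 1)%N)) ||
        ((x == p (i + d + 1)%N) && (y == p i)))].

(* Main.v *)
Require Import Defs.
From mathcomp Require Import all_boot all_order all_algebra.
From mathcomp Require Import zify.
Import Order.TTheory GRing.Theory Num.Theory.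

Section Path.
Variables (N : nat) (G Gl : rel 'I_N) (n d : nat) (p : nat -> 'I_N).

Lemma fs_Gl m x y : Gl x y -> force_seq Gl p d m x y.
Proof. by move=> h; elim: m => //= m IH; rewrite /add_edge IH. Qed.

Lemma fs_le m m' x y : (m <= m')%N -> force_seq Gl p d m x y -> force_seq Gl p d m' x y.
Proof.
move=> le h; elim: m' le => [|m' IH]; first by rewrite leqn0 => /eqP <-.
rewrite leq_eqVlt => /orP[/eqP <- //|]; rewrite ltnS => /IH /= h'.
by rewrite /add_edge h'.
Qed.

Lemma fs_edge a : force_seq Gl p d a.+1 (p (a + d + 1)%N) (p a).
Proof. by rewrite /= /add_edge !eqxx !orbT. Qed.

Lemma fs_char m x y : force_seq Gl p d m x y = Gl x y ||
  has (fun i => ((x == p i) && (y == p (i + d + 1)%N)) ||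
                ((x == p (i + d + 1)%N) && (y == p i))) (iota 0 m).
Proof.
elim: m => [|m IH]; first by rewrite /= orbF.
have -> : iota 0 m.+1 = iota 0 m ++ [:: m] by rewrite -addn1 iotaD.
by rewrite /= /add_edge IH has_cat /= orbF !orbA.
Qed.

Lemma fs_final x y : force_seq Gl p d (n - d - 1)%N x y = Gl1 Gl n d p x y.
Proof.
rewrite fs_char /Gl1; congr (_ || _); apply/hasP/existsP.
  move=> [i]; rewrite mem_iota add0n => /andP[_ hi] h.
  have hin : (i < n)%N by lia.
  exists (Ordinal hin) => /=; rewrite h andbT; lia.
move=> [i /andP[hi h]]; exists (nat_of_ord i) => //.
rewrite mem_iota add0n; lia.
Qed.

Hypotheses (Hpath : induced_path G n p) (d0 : (0 < d)%N)
  (Hpow : pathpow_sub n d p Gl)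
  (Hfoc : forall i : nat, (i + d + 1 < n)%N ->
     focused G Gl (p i) (p (i + d)%N) (path_vertices n p)).

Lemma valid_i i : (i + d + 1 < n)%N ->
  valid_force G (force_seq Gl p d i) (p (i + d)%N) (p i) (p (i + d + 1)%N).
Proof.
move=> hi; case: Hpath => inj Gp.
have neq a b : (a < n)%N -> (b < n)%N -> a <> b -> p a != p b.
  by move=> ha hb nab; apply/eqP => /(inj _ _ ha hb).
have peq a b : (a < n)%N -> (b < n)%N -> (p a == p b) = (a == b).
  move=> ha hb; apply/eqP/eqP => [|->//]; exact: inj.
have pw a b : (a < n)%N -> (b < n)%N -> a <> b -> (a <= b + d)%N -> (b <= a + d)%N ->
    Gl (p a) (p b).
  move=> ha hb nab h1 h2; apply: Hpow => //; [apply/eqP => //| lia].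
case/andP: (Hfoc _ hi) => f1 f2.
rewrite /valid_force /focused; apply/and5P; split.
- apply: neq; lia.
- apply: neq; lia.
- apply: neq; lia.
- rewrite inE Gp; [apply/orP; right; apply/orP; right; apply/eqP; lia | lia | lia].
apply/andP; split; apply/subsetP => u; rewrite !inE => /andP[hu hnu].
- have : u \in path_vertices n p.
    apply: (subsetP f2); rewrite !inE hu /=.
    by apply: contra hnu => /orP[->//|/(fs_Gl i) ->]; rewrite orbT.
  rewrite inE => /existsP[a /eqP ua]; subst u.
  have ha := ltn_ord a.
  move: hu; rewrite peq ?Gp; try lia.
  have [->|na] := eqVneq (nat_of_ord a) (i + d + 1)%N; first by rewrite eqxx.
  move=> hu; exfalso; move/negP: hnu; apply.
  have [ai|nai] := eqVneq (nat_of_ord a) i; first by rewrite ai eqxx.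
  apply/orP; right; apply: fs_Gl; apply: pw; move: hu nai; lia.
- have : u \in path_vertices n p.
    apply: (subsetP f1); rewrite !inE hu /=.
    by apply: contra hnu => /orP[->//|/(fs_Gl i) ->]; rewrite orbT.
  rewrite inE => /existsP[a /eqP ua]; subst u.
  have ha := ltn_ord a.
  move: hu; rewrite peq ?Gp; try lia.
  have [->|na] := eqVneq (nat_of_ord a) (i + d + 1)%N; first by rewrite eqxx.
  move=> hu; exfalso; move/negP: hnu; apply.
  have [ai|nai] := eqVneq (nat_of_ord a) (i + d)%N; first by rewrite ai eqxx.
  apply/orP; right.
  have [ai1|nai1] := eqVneq (nat_of_ord a).+1 i.
    have -> : (i + d = a + d + 1)%N by lia.
    by apply: (@fs_le a.+1); [lia | exact: fs_edge].
  apply: fs_Gl; apply: pw; move: hu nai nai1; lia.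
Qed.
End Path.
Local Open Scope ring_scope.
Local Open Scope ring_scope.

Lemma force_step (R : realFieldType) N (G G' : rel 'I_N) (i j k : 'I_N) (A X : 'M[R]_N) :
  in_S G A -> in_S0bar (compl_graph G') X -> A *m X - X *m A = 0 ->
  subgraph G G' -> valid_force G G' i j k ->
  in_S0bar (compl_graph (add_edge G' j k)) X.
Proof.
move=> [AT AG] [XT XG] /subr0_eq comm sub /and5P[nij njk nik kin /andP[f1 f2]].
have X0 u v : G' u v -> X u v = 0.
  by move=> g; apply: XG; rewrite /compl_graph g andbF orbT.
have Xd u : X u u = 0 by apply: XG; rewrite eqxx.
have Xsym u v : X u v = X v u by rewrite -{1}XT mxE.
have Asym u v : A u v = A v u by rewrite -{1}AT mxE.
have Gik : G i k.
  move: kin; rewrite inE => /orP[/eqP ki|//].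
  by rewrite ki eqxx in nik.
have AXji : (A *m X) j i = 0.
  rewrite mxE big1 // => u _.
  have [->|Aju] := eqVneq (A j u) 0; first by rewrite mul0r.
  have [->|Xui] := eqVneq (X u i) 0; first by rewrite mulr0.
  have uin : u \in cnbhd G j :&: ~: cnbhd G' i.
    rewrite !inE negb_or; apply/andP; split.
      case: (eqVneq u j) => //= nuj.
      by rewrite -(AG j u) // eq_sym.
    apply/andP; split.
      by apply: contra Xui => /eqP ->; rewrite Xd.
    by apply: contra Xui => g; rewrite Xsym X0.
  move: (subsetP f2 u uin); rewrite inE => /eqP ->.
  by rewrite Xsym X0 ?mulr0 //; apply: sub.
have XAji : (X *m A) j i = 0 by rewrite -comm.
rewrite mxE in XAji.
rewrite (bigD1 k) //= in XAji.
rewrite big1 ?addr0 in XAji; last first.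
  move=> u nuk.
  have [->|Xju] := eqVneq (X j u) 0; first by rewrite mul0r.
  have [->|Aui] := eqVneq (A u i) 0; first by rewrite mulr0.
  have uin : u \in cnbhd G i :&: ~: cnbhd G' j.
    rewrite !inE negb_or; apply/andP; split.
      case: (eqVneq u i) => //= nui.
      by rewrite -(AG i u) 1?Asym // eq_sym.
    apply/andP; split.
      by apply: contra Xju => /eqP ->; rewrite Xd.
    by apply: contra Xju => g; rewrite X0.
  move: (subsetP f1 u uin); rewrite inE => uk.
  by rewrite uk in nuk.
have Xjk : X j k = 0.
  move/eqP: XAji; rewrite mulf_eq0 => /orP[/eqP //|]; rewrite Asym => /eqP Ak.
  by move: (AG i k nik); rewrite Ak eqxx Gik.
split => // u v; rewrite /compl_graph /add_edge.
case: eqVneq => [-> _|nuv /=]; first by rewrite Xd.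
rewrite negbK => /or3P[g|/andP[/eqP-> /eqP->]|/andP[/eqP-> /eqP->]].
- by rewrite X0.
- exact: Xjk.
- by rewrite Xsym.
Qed.

Theorem corollary3p6 (R : realFieldType) (N : nat) (G Gl : rel 'I_N)
  (n d : nat) (p : nat -> 'I_N) :
  is_graph G -> is_graph Gl -> subgraph G Gl ->
  induced_path G n p ->
  (0 < d)%N ->
  pathpow_sub n d p Gl ->
  (forall i : nat, (i + d + 1 < n)%N ->
     focused G Gl (p i) (p (i + d)%N) (path_vertices n p)) ->
  [/\ (forall i : nat, (i + d + 1 < n)%N ->
         valid_force G (force_seq Gl p d i) (p (i + d)%N) (p i) (p (i + d + 1)%N)),
      (forall x y, force_seq Gl p d (n - d - 1)%N x y = Gl1 Gl n d p x y) &
      (forall A X : 'M[R]_N, in_S G A -> in_S0bar (compl_graph Gl) X ->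
         A *m X - X *m A = 0 -> in_S0bar (compl_graph (Gl1 Gl n d p)) X)].
Proof.
move=> _ _ sub HP d0 Hpow Hfoc.
have V := @valid_i N G Gl n d p HP d0 Hpow Hfoc.
split => // [x y|A X HA HX comm]; first exact: fs_final.
have step m : (m <= n - d - 1)%N -> in_S0bar (compl_graph (force_seq Gl p d m)) X.
  elim: m => [//|m IH hm].
  apply: (@force_step _ _ _ _ (p (m + d)%N) _ _ A X HA (IH (ltnW hm)) comm).
    by move=> x y /sub; apply: fs_Gl.
  apply: V; lia.
have [XT XG] := step _ (leqnn _).
split => // u v; rewrite /compl_graph -fs_final; exact: XG.
Qed.
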